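(* For every nonnegative integer $n$ and every $0\le k\le n$, \[ B_{n,k}(q)=q^{2nk-n^2}\,B_{n,n-k}(q). \]
   Context: $\mathcal{B}_n$ is the group of signed permutations of $[n]$ (bijections $\pi$ of $\{\pm1,\dots,\pm n\}$ with $\pi(-i)=-\pi(i)$, written $\pi=\pi_1\cdots\pi_n$), integers ordered naturally. Set $\pi_0=0$; $\mathrm{Des}_B(\pi)=\{i\in\{0,\dots,n-1\}:\pi_i>\pi_{i+1}\}$, $\mathrm{des}_B(\pi)=|\mathrm{Des}_B(\pi)|$, $\mathrm{neg}(\pi)=|\{i\in[n]:\pi_i<0\}|$, $\mathrm{fmaj}(\pi)=\sum_{i\in\mathrm{Des}_B(\pi)}2i+\mathrm{neg}(\pi)$. Define $B_{n,k}(q)$ by $\sum_{\pi\in\mathcal{B}_n}t^{\mathrm{des}_B(\pi)}q^{\mathrm{fmaj}(\pi)}=\sum_{k=0}^nB_{n,k}(q)t^k$. *)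

(* Defs.v *)
From HB Require Import structures.
From mathcomp Require Import all_boot all_order all_algebra all_fingroup.
Set Implicit Arguments. Unset Strict Implicit. Unset Printing Implicit Defensive.
Import Order.TTheory GRing.Theory Num.Theory.

(* A signed permutation of [n] is encoded by its underlying permutation
   sigma of {0..n-1} together with a sign vector: for i in [n] (1-based),
   pi_i = (-1)^{neg_(i-1)} * (sigma(i-1) + 1).  This is a bijection with B_n
   (pi(-i) = -pi(i) determines pi from its window pi_1 ... pi_n). *)
Definition signed_perm (n : nat) : finType :=
  ('S_n * {ffun 'I_n -> bool})%type.

(* window entry pi_i for i in [n] (1-based); pi_0 = 0 (and 0 beyond n). *)
Definition sp_entry (n : nat) (p : signed_perm n) (i : nat) : int :=
  match i with
  | 0 => 0%R
  | j.+1 =>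
      match insub j with
      | Some jj => ((-1) ^+ p.2 jj * (p.1 jj).+1%:Z)%R
      | None => 0%R
      end
  end.

Definition DesB (n : nat) (p : signed_perm n) : {set 'I_n} :=
  [set i : 'I_n | (sp_entry p i.+1 < sp_entry p i)%R].

Definition desB (n : nat) (p : signed_perm n) : nat := #|DesB p|.

Definition negB (n : nat) (p : signed_perm n) : nat :=
  #|[set i : 'I_n | p.2 i]|.

Definition fmaj (n : nat) (p : signed_perm n) : nat :=
  (\sum_(i in DesB p) 2 * (i : nat) + negB p)%N.

Definition Bnk (n k : nat) : {poly int} :=
  (\sum_(p : signed_perm n | desB p == k) 'X^(fmaj p))%R.

(* Main.v *)
Require Import Defs.
From mathcomp Require Import all_boot all_order all_algebra all_fingroup.
From mathcomp Require Import zify ring lra.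
Import Order.TTheory GRing.Theory Num.Theory.
Set Implicit Arguments. Unset Strict Implicit. Unset Printing Implicit Defensive.
Open Scope ring_scope.
Arguments sp_entry : simpl never.

Definition bz (b : bool) : int := if b then 1 else 0.

Lemma Posz_sum (I : finType) (P : pred I) (f : I -> nat) :
  Posz (\sum_(i | P i) f i)%N = \sum_(i | P i) Posz (f i).
Proof. by elim/big_rec2: _ => // i a b _ <-; rewrite PoszD. Qed.

Lemma card_sum_bz n (P : pred 'I_n) :
  Posz #|[set i | P i]| = \sum_(0 <= i < n) bz (if insub i is Some j then P j else false).
Proof.
rewrite -sum1_card Posz_sum big_mkcond /= [RHS]big_mkord.
apply: eq_bigr => i _.
by rewrite valK inE /bz; case: (P _).
Qed.

Lemma sp_entryS n (p : signed_perm n) (i : 'I_n) :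
  sp_entry p i.+1 = (-1) ^+ p.2 i * (p.1 i).+1%:Z.
Proof. by rewrite /sp_entry valK. Qed.

Lemma sum_set_bz n (Q : nat -> bool) (f : nat -> nat) :
  Posz (\sum_(i in [set i : 'I_n | Q i]) f i)%N = \sum_(0 <= i < n) bz (Q i) * Posz (f i).
Proof.
rewrite Posz_sum big_mkcond [RHS]big_mkord; apply: eq_bigr => i _.
by rewrite inE /bz; case: (Q i); rewrite ?mul1r ?mul0r.
Qed.

Lemma card_set_bz n (Q : nat -> bool) :
  Posz #|[set i : 'I_n | Q i]| = \sum_(0 <= i < n) bz (Q i).
Proof.
rewrite -sum1_card (@sum_set_bz n Q (fun _ => 1%N)); apply: eq_bigr => i _; by rewrite mulr1.
Qed.

Definition rv n : 'S_n := perm (@rev_ord_inj n).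
Definition gmap n (p : signed_perm n) : signed_perm n :=
  ((rv n * p.1 * rv n)%g, [ffun i => ~~ p.2 (rev_ord i)]).
Definition phi (n : nat) (u : int) : int :=
  if 0 < u then u - (n.+1)%:Z else u + (n.+1)%:Z.

Lemma gmap_entry n (p : signed_perm n) (i : 'I_n) :
  sp_entry (gmap p) i.+1 = phi n (sp_entry p (rev_ord i).+1).
Proof.
rewrite !sp_entryS /gmap /= ffunE !permM /rv !permE /=.
have := ltn_ord (p.1 (rev_ord i)).
case: (p.2 (rev_ord i)) => /=; rewrite /phi ?expr1 ?expr0 ?mulN1r ?mul1r => lt;
  case: ifP; lia.
Qed.

Lemma local_id n (a1 a2 : nat) (b1 b2 : bool) : (a1 < n)%N -> (a2 < n)%N -> a1 != a2 ->
  let u := (-1) ^+ b1 * (a1.+1)%:Z in let v := (-1) ^+ b2 * (a2.+1)%:Z in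
  bz (phi n u < phi n v) + bz (v < u) = 1 + bz (v < 0) - bz (u < 0).
Proof.
move=> l1 l2 ne /=.
case: b1; case: b2 => /=; rewrite ?expr1 ?expr0 ?mulN1r ?mul1r /phi /bz;
  repeat case: ifP; lia.
Qed.

Lemma card_ord_bz n (P : pred 'I_n) :
  Posz #|[set i | P i]| = \sum_(i < n) bz (P i).
Proof.
rewrite -sum1_card Posz_sum big_mkcond /=; apply: eq_bigr => i _.
by rewrite inE /bz; case: (P i).
Qed.

Lemma sumW (m : nat) (u : nat -> int) :
  \sum_(0 <= i < m) (m%:Z - i%:Z) * (u i.+1 - u i) =
  \sum_(0 <= i < m.+1) u i - (m.+1)%:Z * u 0%N.
Proof.
elim: m => [|m IH]; first by rewrite big_nat1 big_geq //; ring.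
rewrite big_nat_recr //= [in RHS]big_nat_recr //=.
have -> : \sum_(0 <= i < m) ((m.+1)%:Z - i%:Z) * (u i.+1 - u i) =
   \sum_(0 <= i < m) (m%:Z - i%:Z) * (u i.+1 - u i) + \sum_(0 <= i < m) (u i.+1 - u i).
  rewrite -big_split /=; apply: eq_bigr => i _.
  have -> : (m.+1)%:Z = m%:Z + 1 by lia.
  ring.
rewrite IH telescope_sumr //.
have -> : (m.+2)%:Z = (m.+1)%:Z + 1 by lia.
have -> : (m.+1)%:Z = m%:Z + 1 by lia.
ring.
Qed.

Lemma sumS (m : nat) :
  \sum_(0 <= i < m) 2 * (m%:Z - i%:Z) = m%:Z * (m.+1)%:Z.
Proof.
elim: m => [|m IH]; first by rewrite big_geq.
rewrite big_nat_recr //=.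
have -> : \sum_(0 <= i < m) 2 * ((m.+1)%:Z - i%:Z) =
   \sum_(0 <= i < m) 2 * (m%:Z - i%:Z) + \sum_(0 <= i < m) 2.
  by rewrite -big_split /=; apply: eq_bigr => i _; lia.
rewrite IH sumr_const_nat subn0.
have -> : (2 : int) *+ m = 2 * m%:Z.
  by clear IH; elim: m => // m' IHm; rewrite mulrS IHm; lia.

lia.
Qed.

Lemma Xform n (p : signed_perm n) k (lt : (k < n)%N) :
  sp_entry p k.+1 = (-1) ^+ p.2 (Ordinal lt) * ((p.1 (Ordinal lt)).+1)%:Z.
Proof. exact: (sp_entryS p (Ordinal lt)). Qed.

Lemma gY n (p : signed_perm n) k : (k < n)%N ->
  sp_entry (gmap p) k.+1 = phi n (sp_entry p (n - k)).
Proof.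
move=> lt; have -> : (n - k = (rev_ord (Ordinal lt)).+1)%N by rewrite /= subnSK.
exact: (gmap_entry p (Ordinal lt)).
Qed.

Lemma local_X n (p : signed_perm n) i : (i.+1 < n)%N ->
  bz (phi n (sp_entry p i.+1) < phi n (sp_entry p i.+2)) =
  1 + bz (sp_entry p i.+2 < 0) - bz (sp_entry p i.+1 < 0)
    - bz (sp_entry p i.+2 < sp_entry p i.+1).
Proof.
move=> lt; have lt' := ltnW lt.
rewrite (Xform p lt') (Xform p lt).
have ne : p.1 (Ordinal lt') != p.1 (Ordinal lt).
  by rewrite (inj_eq (@perm_inj _ _)) -val_eqE /=; lia.
have := local_id (p.2 (Ordinal lt')) (p.2 (Ordinal lt)) (ltn_ord (p.1 (Ordinal lt'))) (ltn_ord (p.1 (Ordinal lt)))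
   ne.
by rewrite /= => H; rewrite -H addrK.
Qed.

Lemma Xn0 n (p : signed_perm n) k : (k < n)%N ->
  bz (0 < sp_entry p k.+1) = 1 - bz (sp_entry p k.+1 < 0) /\
  (phi n (sp_entry p k.+1) < 0) = (0 < sp_entry p k.+1).
Proof.
move=> lt; rewrite (Xform p lt) /phi /bz.
have := ltn_ord (p.1 (Ordinal lt)).
case: (p.2 _) => /= l; rewrite ?expr1 ?expr0 ?mulN1r ?mul1r; split; repeat case: ifP; lia.
Qed.

Lemma sp0 n (p : signed_perm n) : sp_entry p 0 = 0. Proof. by []. Qed.

Lemma revsum n (p : signed_perm n) m (F : int -> int -> int) (w : nat -> int) : n = m.+1 ->
  \sum_(0 <= i < m) F (sp_entry (gmap p) i.+2) (sp_entry (gmap p) i.+1) * w i.+1 =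
  \sum_(0 <= i < m) F (phi n (sp_entry p i.+1)) (phi n (sp_entry p i.+2)) * w (m - i)%N.
Proof.
move=> En; rewrite big_nat_rev; apply: eq_big_nat => i /andP[_ lt].
rewrite add0n gY; last by lia.
rewrite gY; last by lia.
have -> : (n - (m - i.+1).+1 = i.+1)%N by lia.
have -> : (n - (m - i.+1) = i.+2)%N by lia.
by have -> : ((m - i.+1).+1 = m - i)%N by lia.
Qed.

Lemma des_g n (p : signed_perm n) : Posz (desB (gmap p)) = n%:Z - Posz (desB p).
Proof.
rewrite /desB /DesB (@card_set_bz _ (fun k => sp_entry (gmap p) k.+1 < sp_entry (gmap p) k))
  (@card_set_bz _ (fun k => sp_entry p k.+1 < sp_entry p k)).
case: n p => [|m] p; first by rewrite !big_geq.
rewrite !big_nat_recl // !sp0 (gY p (ltn0Sn m)) subn0.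
have E1 : \sum_(0 <= i < m) bz (sp_entry (gmap p) i.+2 < sp_entry (gmap p) i.+1) =
   \sum_(0 <= i < m) (1 + bz (sp_entry p i.+2 < 0) - bz (sp_entry p i.+1 < 0)
                        - bz (sp_entry p i.+2 < sp_entry p i.+1)).
  have := revsum p (fun a b => bz (a < b)) (fun _ => 1) (erefl _).
  rewrite /= => H.
  transitivity (\sum_(0 <= i < m) bz (sp_entry (gmap p) i.+2 < sp_entry (gmap p) i.+1) * 1).
    by apply: eq_bigr => i _; rewrite mulr1.
  rewrite H; apply: eq_big_nat => i /andP[_ lt]; rewrite mulr1; apply: local_X; lia.
rewrite E1 sumrB (eq_bigr (fun i => 1 + (bz (sp_entry p i.+2 < 0) - bz (sp_entry p i.+1 < 0))));
  last by move=> i _; rewrite addrA.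
rewrite big_split /= (@telescope_sumr _ 0 m (fun k => bz (sp_entry p k.+1 < 0))) //.
rewrite sumr_const_nat subn0 -natz.
rewrite (Xn0 p (ltnSn m)).2 (Xn0 p (ltnSn m)).1.
have -> : (m.+1)%:R = (m%:R + 1 : int) by lia.
ring.
Qed.

Lemma neg_sum n (p : signed_perm n) :
  Posz (negB p) = \sum_(0 <= i < n) bz (sp_entry p i.+1 < 0).
Proof.
rewrite /negB card_ord_bz [RHS]big_mkord; apply: eq_bigr => i _.
rewrite sp_entryS; have := ltn_ord (p.1 i).
move=> l; case: (p.2 i); (rewrite /bz ?expr1 ?expr0 ?mulN1r ?mul1r /=; by []).
Qed.

Lemma neg_g n (p : signed_perm n) : Posz (negB (gmap p)) = n%:Z - Posz (negB p).
Proof.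
rewrite /negB !card_ord_bz (reindex_inj (@rev_ord_inj n)) /=.
rewrite (eq_bigr (fun i => 1 - bz (p.2 i))); last first.
  by move=> i _; rewrite ffunE rev_ordK /bz; case: (p.2 i).
by rewrite sumrB sumr_const -[#|xpredT|]/#|'I_n| card_ord natz.
Qed.

Lemma fmaj_g n (p : signed_perm n) :
  Posz (fmaj (gmap p)) = Posz (fmaj p) + n%:Z * n%:Z - 2 * n%:Z * Posz (desB p).
Proof.
have D := card_set_bz n (fun k => sp_entry p k.+1 < sp_entry p k).
rewrite /fmaj !PoszD neg_g.
rewrite (@sum_set_bz _ (fun k => sp_entry (gmap p) k.+1 < sp_entry (gmap p) k) (fun i => 2 * i)%N)
  (@sum_set_bz _ (fun k => sp_entry p k.+1 < sp_entry p k) (fun i => 2 * i)%N).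
rewrite /desB /DesB D neg_sum.
case: n p {D} => [|m] p; first by rewrite !big_geq //; ring.
rewrite !big_nat_recl // !sp0 !muln0 !mulr0 !add0r.
rewrite (revsum p (fun a b => bz (a < b)) (fun k => Posz (2 * k)%N) (erefl _)).
set A := fun k => bz (sp_entry p k < 0).
set e := fun k => bz (sp_entry p k.+2 < sp_entry p k.+1).
rewrite (eq_big_nat _ _ (F2 := fun i =>
   ((2 * (m%:Z - i%:Z) + 2 * ((m%:Z - i%:Z) * (A i.+2 - A i.+1))) + e i * Posz (2 * i.+1)%N)
    - 2 * (m.+1)%:Z * e i)); last first.
  move=> i /andP[_ lt]; rewrite local_X; last by lia.
  have -> : Posz (2 * (m - i))%N = 2 * (m%:Z - i%:Z) by lia.
  have -> : Posz (2 * i.+1)%N = 2 * (i%:Z + 1) by lia.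
  have -> : (m.+1)%:Z = m%:Z + 1 by lia.
  rewrite /A /e; ring.
rewrite sumrB !big_split /= -!mulr_sumr.
have W := sumW m (fun k => A k.+1); simpl in W.
rewrite W big_nat_recl //.
have S2 : 2 * \sum_(0 <= i < m) (m%:Z - i%:Z) = m%:Z * (m.+1)%:Z by rewrite mulr_sumr sumS.
rewrite S2 /A /e.
have -> : (m.+1)%:Z = m%:Z + 1 by lia.
ring.
Qed.

Lemma rvK n : (rv n * rv n = 1)%g.
Proof. by apply/permP => i; rewrite permM !permE /= rev_ordK. Qed.

Lemma gmapK n : involutive (@gmap n).
Proof.
case=> s f; rewrite /gmap /=; congr (_, _).
  by rewrite !mulgA rvK mul1g -mulgA rvK mulg1.
by apply/ffunP => i; rewrite !ffunE rev_ordK negbK.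
Qed.

Lemma desB_le n (p : signed_perm n) : (desB p <= n)%N.
Proof. by rewrite /desB -[X in (_ <= X)%N](card_ord n) max_card. Qed.

Theorem proposition2p3 (n k : nat) :
  (k <= n)%N ->
  ('X^(n ^ 2) * Bnk n k = 'X^(2 * n * k) * Bnk n (n - k))%R.
Proof.
move=> kn; rewrite /Bnk (reindex_inj (inv_inj (@gmapK n))) /= !mulr_sumr.
apply: eq_big => p.
  have := des_g p; have := desB_le p; move=> h1 h2.
  apply/eqP/eqP; lia.
move/eqP=> dk; rewrite -!exprD; congr ('X^_).
have := fmaj_g p; have := des_g p; rewrite -mulnn; lia.
Qed.
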